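(* For every integer $N\ge 0$, let $T_{1\times 3}(5,N)$ be the number of tilings of a $5\times n$ rectangle, $n=3N/5$, by $N$ tiles of size $1\times 3$ (and $0$ if $3N/5\notin\mathbb{Z}$). Then, as formal power series, \[ \sum_{N\ge 0} T_{1\times 3}(5,N)\,z^N=\frac{(1-z^5)^2}{1-6z^5+3z^{10}-z^{15}}. \]
   Context: A tiling of an $m\times n$ rectangle (width $m$, length $n$, made of $mn$ unit squares) by $a\times b$ tiles is a partition of the rectangle into non-overlapping axis-parallel $a\times b$ rectangles with integer corner coordinates, each placed in either of its two orientations. Tilings related by reflections or rotations of the rectangle are counted as distinct. The empty tiling counts once for $N=0$. *)

(* Defs.v *)
From HB Require Import structures.
From mathcomp Require Import all_boot all_order all_algebra.
Set Implicit Arguments. Unset Strict Implicit. Unset Printing Implicit Defensive.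
Import Order.TTheory GRing.Theory Num.Theory.

(* Cells of an m x n rectangle: row index in 'I_m (width m), column index in 'I_n (length n). *)
Definition cell (m n : nat) := ('I_m * 'I_n)%type.

(* A 1 x 3 tile placed horizontally (3 consecutive cells of a row) or
   vertically (3 consecutive cells of a column), lying inside the rectangle
   (the cardinality condition forces the 3 cells to be inside). *)
Definition is_tile13 (m n : nat) (B : {set cell m n}) : bool :=
  [exists x : cell m n,
     (B == [set y : cell m n | (y.1 == x.1) && (x.2 <= y.2 < x.2 + 3)%N])
  || (B == [set y : cell m n | (y.2 == x.2) && (x.1 <= y.1 < x.1 + 3)%N])]
  && (#|B| == 3%N).

Definition tiling13 (m n : nat) (P : {set {set cell m n}}) : bool :=
  partition P [set: cell m n] && [forall B in P, is_tile13 B].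

Definition ntilings13 (m n N : nat) : nat :=
  #|[set P : {set {set cell m n}} | tiling13 P && (#|P| == N)]|.

Definition T13_5 (N : nat) : nat :=
  if (5 %| 3 * N)%N then ntilings13 5 ((3 * N) %/ 5) N else 0%N.

Local Open Scope ring_scope.
Definition numer13 : {poly int} := (1 - 'X^5) ^+ 2.
Definition denom13 : {poly int} := 1 - 6%:P * 'X^5 + 3%:P * 'X^10 - 'X^15.

(* Main.v *)
Require Import Defs.
From HB Require Import structures.
From mathcomp Require Import all_boot all_order all_algebra.
From mathcomp Require Import zify ring.
Set Implicit Arguments. Unset Strict Implicit. Unset Printing Implicit Defensive.

Definition tilingOf (T : finType) (tile : pred {set T}) (P : {set {set T}}) (R : {set T}) :=
  partition P R && [forall B in P, tile B].
Definition cnt (T : finType) (tile : pred {set T}) (R : {set T}) :=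
  #|[set P | tilingOf tile P R]|.

Lemma card_setE (U : finType) (C : pred U) : #|[set P | C P]| = \sum_P (C P : nat).
Proof.
rewrite -sum1_card big_mkcond /=; apply: eq_bigr => P _; rewrite inE; by case: (C P).
Qed.

Lemma cnt_remove (T : finType) (tile : pred {set T}) (R t : {set T}) :
  tile t -> t != set0 -> t \subset R ->
  #|[set P | tilingOf tile P R && (t \in P)]| = cnt tile (R :\: t).
Proof.
move=> tt tn0 tR; rewrite /cnt.
have -> : [set P | tilingOf tile P (R :\: t)] =
   (fun P => P :\ t) @: [set P | tilingOf tile P R && (t \in P)].
  apply/setP => Q; rewrite inE; apply/idP/imsetP.
  - case/andP => pQ tQ.
    have tnQ : t \notin Q.
      apply/negP => tinQ; have := partitionS pQ tinQ.
      move/subsetP => sub; case/set0Pn: tn0 => z zt.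
      by have := sub z zt; rewrite inE zt.
    exists (t |: Q); last by rewrite setU1K.
    rewrite inE setU11 andbT /tilingOf.
    have -> : R = t :|: (R :\: t).
      apply/setP => z; rewrite !inE; case: (boolP (z \in t)) => zt //=.
      by rewrite (subsetP tR).
    rewrite partitionU1 //=; last by rewrite disjoints_subset; apply/subsetP => z zt; rewrite !inE zt.
    apply/forall_inP => B; case/setU1P => [-> //|BQ].
    by move/forall_inP: tQ; apply.
  - case=> P; rewrite inE => /andP[/andP[pP tP] tinP] ->.
    rewrite /tilingOf partitionD1 //=.
    apply/forall_inP => B; rewrite !inE => /andP[_ BP]; by move/forall_inP: tP; apply.
rewrite card_in_imset // => P1 P2; rewrite !inE => /andP[_ t1] /andP[_ t2] e.
by rewrite -(setD1K t1) -(setD1K t2) e.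
Qed.

Lemma count_split (T : finType) (tile : pred {set T}) (R : {set T}) x (s : seq {set T}) :
  (forall B, tile B -> B != set0) ->
  x \in R -> uniq s ->
  (forall t, (t \in s) = [&& tile t, x \in t & t \subset R]) ->
  cnt tile R = \sum_(t <- s) cnt tile (R :\: t).
Proof.
move=> tnz xR us hs.
rewrite (eq_big_seq (fun t => #|[set P | tilingOf tile P R && (t \in P)]|)); last first.
  move=> t ts; move: (ts); rewrite hs => /and3P[tt _ tR]; rewrite cnt_remove //; exact: tnz.
under eq_bigr do rewrite card_setE.
rewrite exchange_big /= /cnt card_setE; apply: eq_bigr => P _.
case: (boolP (tilingOf tile P R)) => tP /=; last by rewrite big1.
case/andP: (tP) => pP tiles.
have xc : x \in cover P by rewrite (cover_partition pP).
have bP := pblock_mem xc.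
have bs : pblock P x \in s.
  rewrite hs mem_pblock xc (partitionS pP bP) andbT.
  by rewrite andbT; apply: (forall_inP tiles).
have -> : \sum_(t <- s) ((t \in P) : nat) = count (fun t => t \in P) s.
  by elim: (s) => [|a l IH]; rewrite ?big_nil ?big_cons //= IH.
rewrite (@eq_in_count _ _ (pred1 (pblock P x))); first by rewrite (count_uniq_mem _ us) bs.
move=> t ts /=; apply/idP/eqP => [tP'|->//].
move: ts; rewrite hs => /and3P[_ xt _].
by rewrite (def_pblock (partition_trivIset pP) tP' xt).
Qed.

Lemma count_range b k n : count (fun j => b <= j < b + k) (iota 0 n) = minn (b+k) n - b.
Proof.
elim: n => [|n IH]; first by rewrite /= minn0.
rewrite -addn1 iotaD count_cat IH /= addn0.
case: (boolP (b <= n < b + k)) => h /=; lia.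
Qed.

Lemma card_ordrange n b k : #|[set j : 'I_n | b <= j < b + k]| = minn (b+k) n - b.
Proof.
rewrite -count_range -val_enum_ord count_map cardsE cardE /enum_mem size_filter -enumT.
by rewrite filter_predT; apply: eq_count => j.
Qed.

Lemma card_hor m n (x : cell m n) :
  #|[set y : cell m n | (y.1 == x.1) && (x.2 <= y.2 < x.2 + 3)]| = minn (x.2+3) n - x.2.
Proof.
rewrite -card_ordrange.
have -> : [set y : cell m n | (y.1 == x.1) && (x.2 <= y.2 < x.2 + 3)] =
  (fun j => (x.1, j)) @: [set j : 'I_n | x.2 <= j < x.2 + 3].
  apply/setP => [[a b]]; rewrite inE /=; apply/idP/imsetP.
  - by case/andP => /eqP -> h; exists b; rewrite ?inE.
  - by case=> j; rewrite inE => h [-> ->]; rewrite eqxx.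
by apply: card_imset => j1 j2 [].
Qed.

Lemma card_ver m n (x : cell m n) :
  #|[set y : cell m n | (y.2 == x.2) && (x.1 <= y.1 < x.1 + 3)]| = minn (x.1+3) m - x.1.
Proof.
rewrite -card_ordrange.
have -> : [set y : cell m n | (y.2 == x.2) && (x.1 <= y.1 < x.1 + 3)] =
  (fun j => (j, x.2)) @: [set j : 'I_m | x.1 <= j < x.1 + 3].
  apply/setP => [[a b]]; rewrite inE /=; apply/idP/imsetP.
  - by case/andP => /eqP -> h; exists a; rewrite ?inE.
  - by case=> j; rewrite inE => h [-> ->]; rewrite eqxx.
by apply: card_imset => j1 j2 [].
Qed.

Lemma tile_nz m n (B : {set cell m n}) : is_tile13 B -> B != set0.
Proof. by case/andP => _ /eqP c3; apply/eqP => e; rewrite e cards0 in c3. Qed.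

Definition reg n c (q : seq nat) : {set cell 5 n} := [set y : cell 5 n | c + nth 0 q y.1 <= y.2].
Definition vok (q : seq nat) := 
  (index 0 q + 2 < 5) && (nth 0 q (index 0 q + 1) == 0) && (nth 0 q (index 0 q + 2) == 0).
Definition vset (q : seq nat) :=
  set_nth 0 (set_nth 0 (set_nth 0 q (index 0 q) 1) (index 0 q + 1) 1) (index 0 q + 2) 1.
Definition hset (q : seq nat) := set_nth 0 q (index 0 q) 3.
Definition tl5 n : pred {set cell 5 n} := fun B => is_tile13 B.
Arguments tl5 n : clear implicits.
Arguments reg n c q : clear implicits.

Lemma step n c q : size q = 5 -> 0 \in q -> c < n ->
  cnt (tl5 n) (reg n c q) =
   (if c + 3 <= n then cnt (tl5 n) (reg n c (hset q)) else 0)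
 + (if vok q then cnt (tl5 n) (reg n c (vset q)) else 0).
Proof.
move=> sq zq cn.
have r0lt : index 0 q < 5 by rewrite -sq index_mem.
have nth0 : nth 0 q (index 0 q) = 0 by rewrite nth_index.
have before : forall r, r < index 0 q -> nth 0 q r != 0.
  by move=> r hr; have := before_find 0 hr => /= ->.
set r0 := index 0 q in r0lt nth0 before *.
pose x : cell 5 n := (Ordinal r0lt, Ordinal cn).
pose H := [set y : cell 5 n | (y.1 == x.1) && (x.2 <= y.2 < x.2 + 3)].
pose V := [set y : cell 5 n | (y.2 == x.2) && (x.1 <= y.1 < x.1 + 3)].
pose s := (if c + 3 <= n then [:: H] else [::]) ++ (if vok q then [:: V] else [::]).
have xR : x \in reg n c q by rewrite inE /= nth0 addn0.
have us : uniq s.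
  rewrite /s; case: ifP => h3; case: (vok q) => //=; rewrite andbT inE.
  have c1 : c.+1 < n by lia.
  apply/eqP => e; have := congr1 (fun A : {set cell 5 n} => (Ordinal r0lt, Ordinal c1) \in A) e.
  rewrite /H /V !inE /= -!val_eqE /=; lia.
have hz : vok q -> forall i, r0 <= i < r0 + 3 -> nth 0 q i = 0.
  rewrite /vok -/r0 => /andP[/andP[h2 /eqP z1] /eqP z2] i hi.
  have : i = r0 \/ i = r0 + 1 \/ i = r0 + 2 by lia.
  by case => [->|[->|->]].
have hs : forall t, (t \in s) = [&& tl5 n t, x \in t & t \subset reg n c q].
  move=> t; apply/idP/idP.
  - rewrite mem_cat; case/orP.
    + case: ifP => h3 //; rewrite inE => /eqP ->.
      rewrite /tl5 /is_tile13 card_hor /=.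
      apply/and3P; split.
      * apply/andP; split; [apply/existsP; exists x; by rewrite eqxx | apply/eqP; lia].
      * by rewrite inE eqxx leqnn /=; lia.
      * apply/subsetP => y; rewrite !inE => /andP[/eqP -> h]; rewrite /= ?nth0; move: h; rewrite /x /=; lia.
    + case: ifP => hv //; rewrite inE => /eqP ->.
      rewrite /tl5 /is_tile13 card_ver /=.
      move: (hv); rewrite /vok -/r0 => /andP[/andP[h2 _] _].
      apply/and3P; split.
      * apply/andP; split; [apply/existsP; exists x; by rewrite eqxx orbT | apply/eqP; lia].
      * by rewrite inE eqxx leqnn /=; lia.
      * apply/subsetP => y; rewrite !inE => /andP[/eqP -> h]; move: h; rewrite /x /= => h; rewrite hz //; lia.
  - case/and3P => /andP[/existsP[[a b] /orP[/eqP tE|/eqP tE]] /eqP c3] xt tR; subst t.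
    + move: xt; rewrite inE /= => /andP[/eqP e1 /andP[b1 b2]].
      have abR : (a, b) \in reg n c q.
        by apply: (subsetP tR); rewrite inE /= eqxx leqnn /=; lia.
      subst a; move: abR; rewrite inE /= nth0 addn0 => cb.
      have e2 : b = Ordinal cn by apply: val_inj => /=; lia.
      subst b; move: c3; rewrite card_hor /= => c3.
      by rewrite mem_cat; apply/orP; left; rewrite ifT ?inE //; lia.
    + move: xt; rewrite inE /= => /andP[/eqP e1 /andP[b1 b2]].
      have abR : (a, b) \in reg n c q.
        by apply: (subsetP tR); rewrite inE /= eqxx leqnn /=; lia.
      subst b; move: abR; rewrite inE /= => cb.
      have za : nth 0 q a = 0 by lia.
      have ea : a = Ordinal r0lt.
        apply: val_inj => /=; case: (ltnP a r0) => ha; last by lia.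
        by have := before _ ha; rewrite za.
      subst a; move: c3 tR; rewrite card_ver /= => c3 tR.
      have r2 : r0 + 2 < 5 by lia.
      have q1 : nth 0 q (r0 + 1) = 0.
        have r1 : r0 + 1 < 5 by lia.
        have := subsetP tR (Ordinal r1, Ordinal cn); rewrite !inE /= eqxx /=.
        move=> h; have hh : r0 <= r0 + 1 < r0 + 3 by lia.
        have := h hh; lia.
      have q2 : nth 0 q (r0 + 2) = 0.
        have := subsetP tR (Ordinal r2, Ordinal cn); rewrite !inE /= eqxx /=.
        move=> h; have hh : r0 <= r0 + 2 < r0 + 3 by lia.
        have := h hh; lia.
      have hv : vok q by rewrite /vok -/r0 r2 q1 q2 eqxx.
      by rewrite mem_cat hv; apply/orP; right; rewrite inE.
rewrite (count_split (@tile_nz 5 n) xR us hs) big_cat /=.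
have eH : reg n c q :\: H = reg n c (hset q).
  apply/setP => y; rewrite !inE /hset nth_set_nth /= -/r0 -val_eqE /=.
  case: eqP => e; first by rewrite e nth0; lia.
  by rewrite andTb.
have eV : vok q -> reg n c q :\: V = reg n c (vset q).
  rewrite /vok -/r0 => /andP[/andP[h2 /eqP z1] /eqP z2].
  apply/setP => y; rewrite !inE /vset -/r0 -!val_eqE /=.
  rewrite nth_set_nth /=; case: (@eqP _ (nat_of_ord y.1) (r0 + 2)) => [->|n2]; first by rewrite z2; lia.
  rewrite nth_set_nth /=; case: (@eqP _ (nat_of_ord y.1) (r0 + 1)) => [->|n1]; first by rewrite z1; lia.
  rewrite nth_set_nth /=; case: (@eqP _ (nat_of_ord y.1) r0) => [->|n0]; first by rewrite nth0; lia.
  move: (nth 0 q y.1) n2 n1 n0 => v; move: (nat_of_ord y.1) => i; move: (nat_of_ord y.2) => j; lia.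
by case: (c + 3 <= n); case: (boolP (vok q)) => hv; rewrite /= ?big_cons ?big_nil ?eH ?eV ?addn0.
Qed.

Definition Gp n c (q : seq nat) :=
  if all (fun v => c + v <= n) q then cnt (tl5 n) (reg n c q) else 0.

Fixpoint colfill (k : nat) (q : seq nat) : seq (seq nat) :=
  match k with
  | 0 => [::]
  | k'.+1 => if 0 \in q then colfill k' (hset q) ++ (if vok q then colfill k' (vset q) else [::])
             else [:: map predn q]
  end.

Lemma count_set_nth (q : seq nat) r v : r < size q -> 0 < v ->
  count (pred1 0) (set_nth 0 q r v) + (nth 0 q r == 0) = count (pred1 0) q.
Proof.
move=> + hv; elim: q r => [|a q IH] [|r] //= hr.
  by move: (count _ q) => m; case: (a == 0); case: (boolP (v == 0)) => h //=; lia.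
by rewrite -addnA IH.
Qed.

Lemma all_set_nth (P : pred nat) (q : seq nat) r v : r < size q -> P (nth 0 q r) ->
  all P (set_nth 0 q r v) = P v && all P q.
Proof.
elim: q r => [|a q IH] [|r] //= hr hp.
  by rewrite hp.
by rewrite IH // andbCA.
Qed.

Lemma size_set_nth5 (q : seq nat) r v : r < size q -> size (set_nth 0 q r v) = size q.
Proof. by move=> h; rewrite size_set_nth; apply/maxn_idPr. Qed.

Lemma colfill_ok n k : forall q c, size q = 5 -> count (pred1 0) q < k -> c < n ->
  Gp n c q = \sum_(t <- colfill k q) Gp n c.+1 t.
Proof.
elim: k => [|k IH] q c sq cq cn //=.
case: ifP => zq; last first.
  rewrite big_seq1 /Gp.
  have nz : forall v, v \in q -> v != 0 by move=> v vq; apply/negP => /eqP e; rewrite -e vq in zq.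
  have -> : all (fun v => c.+1 + v <= n) (map predn q) = all (fun v => c + v <= n) q.
    rewrite all_map; apply: eq_in_all => v /nz /=; lia.
  case: ifP => // _; congr cnt; apply/setP => y; rewrite !inE.
  have yl : y.1 < size q by rewrite sq.
  rewrite (nth_map 0) //; have := nz _ (mem_nth 0 yl); move: (nth 0 q y.1) => v; move: (nat_of_ord y.2) => j; lia.
have r0lt : index 0 q < 5 by rewrite -sq index_mem.
have nth0 : nth 0 q (index 0 q) = 0 by rewrite nth_index.
have sH : size (hset q) = 5 by rewrite size_set_nth5 // sq.
have cH : count (pred1 0) (hset q) < k.
  have := @count_set_nth q (index 0 q) 3; rewrite nth0 eqxx /hset sq => h; have := h r0lt isT; lia.
rewrite big_cat /= -IH //.
set P := fun v => c + v <= n.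
have aH : all P (hset q) = (c + 3 <= n) && all P q.
  by rewrite /hset all_set_nth ?sq // nth0 /P; lia.
have hV : vok q -> [/\ size (vset q) = 5, count (pred1 0) (vset q) < k &
                            all P (vset q) = all P q].
  rewrite /vok => /andP[/andP[h2 /eqP z1] /eqP z2].
  rewrite /vset; set r := index 0 q in h2 z1 z2 nth0 r0lt *.
  have s1 : size (set_nth 0 q r 1) = 5 by rewrite size_set_nth5 sq.
  have s2 : size (set_nth 0 (set_nth 0 q r 1) (r+1) 1) = 5 by rewrite size_set_nth5 s1 //; lia.
  have n1 : nth 0 (set_nth 0 q r 1) (r + 1) = 0.
    by rewrite nth_set_nth /= (_ : (r + 1 == r) = false) //; lia.
  have n2 : nth 0 (set_nth 0 (set_nth 0 q r 1) (r+1) 1) (r + 2) = 0.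
    rewrite nth_set_nth /= (_ : (r + 2 == r + 1) = false); last by lia.
    by rewrite nth_set_nth /= (_ : (r + 2 == r) = false); last by lia.
  split.
  - by rewrite size_set_nth5 s2 //; lia.
  - have := @count_set_nth (set_nth 0 (set_nth 0 q r 1) (r+1) 1) (r + 2) 1.
    rewrite s2 n2 => h; have {h} := h h2 isT.
    have := @count_set_nth (set_nth 0 q r 1) (r + 1) 1.
    rewrite s1 n1 => h; have h1 : r + 1 < 5 by lia.
    have {h} := h h1 isT.
    have := @count_set_nth q r 1.
    rewrite sq nth0 => h; have {h} := h r0lt isT.
    rewrite eqxx /= => e1 e2 e3; move: cq; rewrite -e1 -e2 -e3 => cq; lia.
  - have p1 : P 1 by rewrite /P; lia.
    have p0 : P 0 by rewrite /P; lia.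
    have h1 : r + 1 < 5 by lia.
    rewrite all_set_nth ?s2 ?n2 // p1 /=.
    rewrite all_set_nth ?s1 ?n1 // p1 /=.
    by rewrite all_set_nth ?sq ?nth0 // p1.
have key : Gp n c q = Gp n c (hset q) + (if vok q then Gp n c (vset q) else 0).
  rewrite {1 2}/Gp aH; case: (boolP (all P q)) => hq.
    rewrite step // andbT; congr addn.
    case: (boolP (vok q)) => hv //.
    by case: (hV hv) => _ _ aV; rewrite /Gp aV hq.
  rewrite andbF; case: (boolP (vok q)) => hv //.
  by case: (hV hv) => _ _ aV; rewrite /Gp aV (negbTE hq).
rewrite key; case: (boolP (vok q)) => hv; last by rewrite big_nil.
by case: (hV hv) => sV cV _; rewrite -IH.
Qed.

Definition Fn (f : seq nat -> nat) (s : seq nat) : nat := sumn (map f (colfill 6 s)).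
Definition d0 (s : seq nat) : nat := all (fun v => v == 0) s.
Definition X (j : nat) : seq nat -> nat := iter j Fn d0.
Definition S5 : seq (seq nat) := [:: [:: 0; 0; 0; 0; 0]; [:: 2; 2; 2; 2; 2]; [:: 2; 2; 0; 0; 0]; [:: 2; 0; 0; 0; 2]; [:: 0; 0; 0; 2; 2]; [:: 1; 1; 1; 1; 1]; [:: 1; 1; 2; 2; 2]; [:: 1; 1; 0; 0; 0]; [:: 1; 2; 2; 2; 1]; [:: 1; 0; 0; 0; 1]; [:: 2; 2; 2; 1; 1]; [:: 0; 0; 0; 1; 1]; [:: 0; 0; 1; 1; 1]; [:: 0; 0; 2; 2; 2]; [:: 0; 1; 1; 1; 0]; [:: 0; 2; 2; 2; 0]; [:: 1; 1; 1; 0; 0]; [:: 2; 2; 2; 0; 0]; [:: 2; 2; 1; 1; 1]; [:: 2; 1; 1; 1; 2]; [:: 1; 1; 1; 2; 2]].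

Lemma C1 : all (fun s => size s == 5) S5. Proof. by vm_compute. Qed.
Lemma C2 : all (fun s => all (fun t => t \in S5) (colfill 6 s)) S5. Proof. by vm_compute. Qed.
Lemma C3 : all (fun s => X 9 s + 3 * X 3 s == 6 * X 6 s + X 0 s) S5. Proof. by vm_compute. Qed.
Lemma C40 : X 0 [:: 0; 0; 0; 0; 0] = 1. Proof. by vm_compute. Qed.
Lemma C43 : X 3 [:: 0; 0; 0; 0; 0] = 4. Proof. by vm_compute. Qed.
Lemma C46 : X 6 [:: 0; 0; 0; 0; 0] = 22. Proof. by vm_compute. Qed.
Lemma C4 : [:: X 0 [:: 0; 0; 0; 0; 0]; X 3 [:: 0; 0; 0; 0; 0]; X 6 [:: 0; 0; 0; 0; 0]] = [:: 1; 4; 22].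
Proof. by vm_compute. Qed.

Lemma sumn_lin (l : seq (seq nat)) (f g : seq nat -> nat) k :
  sumn (map f l) + k * sumn (map g l) = sumn (map (fun t => f t + k * g t) l).
Proof. elim: l => [|a l IH] /=; first by rewrite muln0. rewrite -IH; lia. Qed.

Lemma Xrec j s : s \in S5 -> X (j + 9) s + 3 * X (j + 3) s = 6 * X (j + 6) s + X j s.
Proof.
elim: j s => [|j IH] s sS.
  by have := allP C3 s sS; move/eqP.
rewrite !addSn /X !iterS -!/(X _) /Fn sumn_lin [6 * _ + _]addnC sumn_lin.
congr sumn; apply/eq_in_map => t tc.
have tS : t \in S5 by have := allP C2 s sS; move/allP; apply.
have := IH t tS; lia.
Qed.

Lemma cnt0 n : cnt (tl5 n) set0 = 1.
Proof.
rewrite /cnt.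
have -> : [set P | tilingOf (tl5 n) P set0] = [set set0].
  apply/setP => P; rewrite !inE /tilingOf partition_set0.
  case: eqP => [->|] //=; apply/forall_inP => B; by rewrite inE.
by rewrite cards1.
Qed.

Lemma Gbase n q : Gp n n q = d0 q.
Proof.
rewrite /Gp /d0.
have -> : all (fun v => n + v <= n) q = all (fun v => v == 0) q by apply: eq_all => v /=; lia.
case: ifP => // h; transitivity (cnt (tl5 n) set0); last exact: cnt0.
congr cnt; apply/setP => y; rewrite !inE.
apply/negbTE; rewrite -ltnNge; apply: (leq_trans (ltn_ord y.2)); exact: leq_addr.
Qed.

Lemma link n d : forall c s, c + d = n -> s \in S5 -> Gp n c s = X d s.
Proof.
elim: d => [|d IH] c s e sS; first by rewrite addn0 in e; rewrite e Gbase.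
have sz : size s = 5 by have := allP C1 s sS; move/eqP.
have cn : c < n by lia.
rewrite (colfill_ok (k := 6) sz) //; last by apply: leq_ltn_trans (count_size _ _) _; rewrite sz.
rewrite /X iterS -/(X d) /Fn.
have -> : \sum_(t <- colfill 6 s) Gp n c.+1 t = sumn (map (Gp n c.+1) (colfill 6 s)).
  by elim: (colfill 6 s) => [|a l IH2]; rewrite ?big_nil ?big_cons //= IH2.
congr sumn; apply/eq_in_map => t tc.
have tS : t \in S5 by have := allP C2 s sS; move/allP; apply.
apply: IH => //; lia.
Qed.

Import Order.TTheory GRing.Theory Num.Theory.

Definition z5 : seq nat := [:: 0; 0; 0; 0; 0].

Lemma ntil n N : 3 * N = 5 * n -> ntilings13 5 n N = X n z5.
Proof.
move=> e; rewrite /ntilings13.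
have -> : [set P : {set {set cell 5 n}} | tiling13 P && (#|P| == N)] =
          [set P | tilingOf (tl5 n) P setT].
  apply/setP => P; rewrite !inE.
  have -> : tilingOf (tl5 n) P setT = tiling13 P by [].
  case: (boolP (tiling13 P)) => h //=; apply/eqP.
  case/andP: h => pP tP.
  have := card_partition pP; rewrite cardsT card_prod !card_ord.
  rewrite (eq_bigr (fun _ => 3)); last by move=> A /(forall_inP tP) /andP[_ /eqP].
  rewrite sum_nat_const; move: #|P| => p; lia.
rewrite -(@link n n 0 z5) //; rewrite /Gp /=.
have -> : reg n 0 z5 = setT.
  apply/setP => y; rewrite !inE.
  have -> : nth 0 z5 y.1 = 0 by rewrite (_ : z5 = nseq 5 0) // nth_nseq; case: ifP.
  by [].
by [].
Qed.

Lemma T5k k : T13_5 (5 * k) = X (3 * k) z5.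
Proof.
rewrite /T13_5 mulnCA dvdn_mulr // mulKn //; apply: ntil; lia.
Qed.

Lemma Tnot N : ~~ (5 %| N) -> T13_5 N = 0.
Proof. by move=> h; rewrite /T13_5 Gauss_dvdr // (negbTE h). Qed.

Lemma Xr m : X (3 * m + 9) z5 + 3 * X (3 * m + 3) z5 = 6 * X (3 * m + 6) z5 + X (3 * m) z5.
Proof. by apply: Xrec. Qed.

Local Open Scope ring_scope.

Lemma denomE : denom13 = 1 - 6%:P * 'X^5 + 3%:P * 'X^10 - 'X^15.
Proof. by []. Qed.

Lemma numerE : numer13 = 1 - 2%:P * 'X^5 + 'X^10.
Proof. rewrite /numer13 (_ : 'X^10 = 'X^5 * 'X^5 :> {poly int}); last by rewrite -exprD. 
ring. Qed.

Theorem mainTheorem2 :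
  forall N : nat,
    \sum_(k < N.+1) ((T13_5 k)%:Z * denom13`_(N - k)) = numer13`_N.
Proof.
move=> N.
pose F : {poly int} := \poly_(k < N.+1) (T13_5 k)%:Z.
have -> : \sum_(k < N.+1) ((T13_5 k)%:Z * denom13`_(N - k)) = (F * denom13)`_N.
  by rewrite coefM; apply: eq_bigr => k _; rewrite coef_poly ltn_ord.
have -> : F * denom13 = F - 6%:P * ('X^5 * F) + 3%:P * ('X^10 * F) - 'X^15 * F.
  by rewrite denomE; ring.
rewrite numerE !coefB !coefD !coefN !coefCM !coefXnM !coef1 !coefXn !coef_poly.
rewrite !ltnS !leq_subr leqnn.
case: (boolP (5 %| N)%N) => h5; last first.
  have Z j : (5 * j <= N)%N -> T13_5 (N - 5 * j) = 0%N.
    move=> hj; apply: Tnot; apply: contra h5 => d.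
    have -> : N = ((N - 5 * j) + 5 * j)%N by lia.
    by rewrite dvdn_add // dvdn_mulr.
  have Z1 : (4 < N)%N -> T13_5 (N - 5) = 0%N by move=> h; have := Z 1; rewrite muln1; apply; lia.
  have Z2 : (9 < N)%N -> T13_5 (N - 10) = 0%N by move=> h; have := Z 2; rewrite (_ : (5 * 2 = 10)%N) //; apply; lia.
  have Z3 : (14 < N)%N -> T13_5 (N - 15) = 0%N by move=> h; have := Z 3; rewrite (_ : (5 * 3 = 15)%N) //; apply; lia.
  have e0 : (N == 0%N) = false by apply/negbTE; apply: contra h5 => /eqP ->.
  have e5 : (N == 5%N) = false by apply/negbTE; apply: contra h5 => /eqP ->.
  have e10 : (N == 10%N) = false by apply/negbTE; apply: contra h5 => /eqP ->.
  rewrite (Tnot h5) e0 e5 e10.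
  have I1 : (if (N <= 4)%N then 0 else (T13_5 (N - 5))%:Z) = 0 :> int by case: leqP => // h; rewrite Z1.
  have I2 : (if (N <= 9)%N then 0 else (T13_5 (N - 10))%:Z) = 0 :> int by case: leqP => // h; rewrite Z2.
  have I3 : (if (N <= 14)%N then 0 else (T13_5 (N - 15))%:Z) = 0 :> int by case: leqP => // h; rewrite Z3.
  rewrite I1 I2 I3.
  lia.
case/dvdnP: h5 => k ->.
have V0 : T13_5 0 = 1%N by have := T5k 0; rewrite muln0 => ->; exact: C40.
have V5 : T13_5 5 = 4%N by have := T5k 1; rewrite !muln1 => ->; exact: C43.
have V10 : T13_5 10 = 22%N by have := T5k 2; rewrite (_ : (5 * 2 = 10)%N) // (_ : (3 * 2 = 6)%N) // => ->; exact: C46.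
case: k => [|[|[|m]]].
- rewrite mul0n V0 /=; lia.
- rewrite mul1n V5 (_ : (5 - 5 = 0)%N) // V0 /=; lia.
- rewrite (_ : (2 * 5 = 10)%N) // V10 (_ : (10 - 5 = 5)%N) // V5 (_ : (10 - 10 = 0)%N) // V0 /=; lia.
have a0 : T13_5 (m.+3 * 5) = X (3 * m + 9) z5 by rewrite mulnC T5k; congr (X _ _); lia.
have a1 : T13_5 (m.+3 * 5 - 5) = X (3 * m + 6) z5 by rewrite (_ : (m.+3 * 5 - 5 = 5 * m.+2)%N) ?T5k; [congr (X _ _)|]; lia.
have a2 : T13_5 (m.+3 * 5 - 10) = X (3 * m + 3) z5 by rewrite (_ : (m.+3 * 5 - 10 = 5 * m.+1)%N) ?T5k; [congr (X _ _)|]; lia.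
have a3 : T13_5 (m.+3 * 5 - 15) = X (3 * m) z5 by rewrite (_ : (m.+3 * 5 - 15 = 5 * m)%N) ?T5k; lia.
rewrite a0 a1 a2 a3.
rewrite (_ : (m.+3 * 5 <= 4)%N = false); last by lia.
rewrite (_ : (m.+3 * 5 <= 9)%N = false); last by lia.
rewrite (_ : (m.+3 * 5 <= 14)%N = false); last by lia.
rewrite (_ : (m.+3 * 5 == 0)%N = false); last by lia.
rewrite (_ : (m.+3 * 5 == 5)%N = false); last by lia.
rewrite (_ : (m.+3 * 5 == 10)%N = false); last by lia.
have := Xr m; lia.
Qed.
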